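(* Let $M\subseteq V$, let $SB^\ast$ be a minimum satellite bridge for $M$, and let $C\subseteq V_S$ be a set of satellite nodes each of which is adjacent in $\widetilde G$ to at least one vertex of $M$. Then there is a tree in $\widetilde G_s$ whose vertex set contains $N(SB^\ast)\cup C$ and which has at most $|N(SB^\ast)|+3|C|-1$ edges. Consequently, every minimum Steiner tree $ST^\ast$ of $C$ in $\widetilde G_s$ (a tree in $\widetilde G_s$ containing $C$ with the minimum number of edges) satisfies $|E(ST^\ast)|\le |N(SB^\ast)|+3|C|-1$.
   Context: Let $G=(V,E)$ be a finite, simple, undirected, connected graph with $|V|\ge 2$. Fix a positive integer $K$ and, for every $u\in V$, a nonempty set $\Gamma(u)\subseteq\{1,\dots,K\}$. Let $nb_G(u)$ be the neighbours of $u$ in $G$. For a tree $T$, $N(T)$ and $E(T)$ are its vertex and edge sets. The extended graph $\widetilde G=(\widetilde V,\widetilde E)$ of $G$: (i) initially $\widetilde V=V$, $\widetilde E=\emptyset$; (ii) for each $u\in V$ and each $i\in\bigcup_{v\in nb_G(u)}\Gamma(v)$, add a new vertex $\lambda(u,i)$ (satellite node of $u$; $u$ is its nuclear node); $\Psi(u)$ is the set of satellite nodes of $u$; (iii) for each $u\in V$, join every pair of distinct vertices of $\Psi(u)\cup\{u\}$; (iv) for each edge $\{u,v\}\in E$ (in each orientation $(u,v)$), each $i\in\Gamma(v)$, $j\in\Gamma(u)$, add edges $\{\lambda(u,i),\lambda(v,j)\}$, $\{\lambda(u,i),v\}$, $\{u,\lambda(v,j)\}$. $V_S=\widetilde V\setminus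 V$ is the set of satellite nodes, and $\widetilde G_s$ is the subgraph of $\widetilde G$ induced by $V_S$. Given $M\subseteq V$, a satellite bridge is a (nonempty) subtree $SB$ of $\widetilde G$ all of whose vertices are satellite nodes and such that every vertex of $M$ is adjacent in $\widetilde G$ to at least one vertex of $SB$. A minimum satellite bridge $SB^\ast$ is a satellite bridge with the minimum number of vertices. *)

(* Defs.v *)
From mathcomp Require Import all_boot.
Set Implicit Arguments. Unset Strict Implicit. Unset Printing Implicit Defensive.

(* Vertices of the extended graph: inl u = nuclear node u,
   inr (u, i) = satellite node lambda(u, i).  Colours 1..K are encoded
   by 'I_K (colour c is represented by c-1). *)
Definition xvert (V : finType) (K : nat) : finType := (V + V * 'I_K)%type.

Section Extended.
Variables (V : finType) (K : nat) (e : rel V) (Gamma : V -> {set 'I_K}).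

(* lambda(u,i) exists iff i is in the union of Gamma(v) over neighbours v of u *)
Definition sat_exists (p : V * 'I_K) : bool :=
  [exists v, e p.1 v && (p.2 \in Gamma v)].

Definition is_sat (x : xvert V K) : bool :=
  match x with inl _ => false | inr p => sat_exists p end.

Definition nuc_sat (u : V) (p : V * 'I_K) : bool :=
  ((p.1 == u) && sat_exists p)
  || (e u p.1 && (p.2 \in Gamma u)).

Definition sat_sat (p q : V * 'I_K) : bool :=
  [&& p.1 == q.1, p.2 != q.2, sat_exists p & sat_exists q]
  || [&& e p.1 q.1, p.2 \in Gamma q.1 & q.2 \in Gamma p.1].

Definition xedge : rel (xvert V K) := fun x y =>
  match x, y with
  | inl _, inl _ => false
  | inl u, inr p => nuc_sat u p
  | inr p, inl u => nuc_sat u p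
  | inr p, inr q => sat_sat p q
  end.
End Extended.

Section Trees.
Variable T : finType.

Definition tadj (F : {set {set T}}) : rel T := fun x y => [set x; y] \in F.

Definition is_tree (adj : rel T) (N : {set T}) (F : {set {set T}}) : Prop :=
  [/\ N != set0,
      (forall f, f \in F -> exists x y,
          [/\ x != y, f = [set x; y], x \in N, y \in N & adj x y]),
      (forall x y, x \in N -> y \in N -> connect (tadj F) x y) &
      (forall s : seq T, 3 <= size s -> uniq s -> ~~ cycle (tadj F) s)].
End Trees.

Section Bridge.
Variables (V : finType) (K : nat) (e : rel V) (Gamma : V -> {set 'I_K}).

Definition sat_tree (N : {set xvert V K}) (F : {set {set xvert V K}}) : Prop :=
  is_tree (xedge e Gamma) N F /\ {subset N <= is_sat e Gamma}.

Definition sat_bridge (M : {set V}) N F : Prop :=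
  sat_tree N F /\ (forall m, m \in M -> exists2 x, x \in N & xedge e Gamma (inl m) x).

Definition min_sat_bridge (M : {set V}) N F : Prop :=
  sat_bridge M N F /\ (forall N' F', sat_bridge M N' F' -> #|N| <= #|N'|).

Definition steiner_tree (C : {set xvert V K}) N F : Prop :=
  sat_tree N F /\ C \subset N.

Definition min_steiner_tree (C : {set xvert V K}) N F : Prop :=
  steiner_tree C N F /\ (forall N' F', steiner_tree C N' F' -> #|F| <= #|F'|).
End Bridge.

(* Main.v *)
Require Import Defs.
From mathcomp Require Import all_boot.
Set Implicit Arguments. Unset Strict Implicit. Unset Printing Implicit Defensive.

Section Gen.
Variable T : finType.
Variable adj : rel T.

Definition rW (W : {set T}) : rel T := fun a b => [&& a \in W, b \in W & adj a b].

Lemma cross (A : {set T}) (r : rel T) p x :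
  x \in A -> last x p \notin A -> path r x p -> exists a b, [/\ a \in A, b \notin A & r a b].
Proof.
elim: p x => [|y p IH] x /= xA; first by rewrite xA.
move=> lA /andP[rxy pp]; case: (boolP (y \in A)) => yA.
  exact: IH yA lA pp.
by exists x, y.
Qed.

Lemma edge_notin (N : {set T}) (F : {set {set T}}) b w :
  (forall f, f \in F -> exists x y,
          [/\ x != y, f = [set x; y], x \in N, y \in N & adj x y]) ->
  b \notin N -> [set b; w] \in F -> False.
Proof.
move=> HF bN /HF [x [y [_ E xN yN _]]].
have : b \in [set x; y] by rewrite -E !inE eqxx.
by case/set2P=> E'; move: bN; rewrite E' ?xN ?yN.
Qed.

Lemma tree1 r : is_tree adj [set r] set0.
Proof.
split.
- by apply/set0Pn; exists r; rewrite inE.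
- by move=> f; rewrite inE.
- by move=> x y; rewrite !inE => /eqP-> /eqP->; exact: connect0.
- case=> [|z s] //= _ _.
  by rewrite rcons_path {2}/tadj inE andbF.
Qed.

Lemma grow N F a b :
  is_tree adj N F -> a \in N -> b \notin N -> adj a b ->
  is_tree adj (b |: N) ([set a; b] |: F).
Proof.
case=> _ HF HC HA aN bN ab.
have ab' : a != b by apply: contraNneq bN => <-.
split.
- by apply/set0Pn; exists b; rewrite !inE eqxx.
- move=> f; rewrite in_setU1 => /orP[/eqP->|fF].
    by exists a, b; split; rewrite // !inE ?eqxx ?aN ?orbT.
  have [x [y [xy E xN yN axy]]] := HF f fF.
  by exists x, y; split; rewrite // !inE ?xN ?yN ?orbT.
- have sub : subrel (tadj F) (connect (tadj ([set a; b] |: F))).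
    by move=> u v uv; apply: connect1; rewrite /tadj in_setU1; apply/orP; right.
  have lift : forall u v, u \in N -> v \in N -> connect (tadj ([set a; b] |: F)) u v.
    by move=> u v uN vN; apply: (connect_sub sub); apply: HC.
  have ba : connect (tadj ([set a; b] |: F)) b a.
    by apply: connect1; rewrite /tadj in_setU1 setUC eqxx.
  have ab2 : connect (tadj ([set a; b] |: F)) a b.
    by apply: connect1; rewrite /tadj in_setU1 eqxx.
  move=> x y; rewrite !inE => /orP[/eqP->|xN] /orP[/eqP->|yN].
  + exact: connect0.
  + exact: connect_trans ba (lift _ _ aN yN).
  + exact: connect_trans (lift _ _ xN aN) ab2.
  + exact: lift.
-
  have key : forall w, w != b -> tadj ([set a; b] |: F) b w -> w = a.
    move=> w wb; rewrite /tadj in_setU1 => /orP[/eqP E|wF]; last first.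
      by case: (edge_notin HF bN wF).
    have : w \in [set a; b] by rewrite -E !inE eqxx orbT.
    by case/set2P=> // wb'; rewrite wb' eqxx in wb.
  move=> s s3 us; apply/negP => cs.
  case: (boolP (b \in s)) => bs; last first.
    case/negP: (HA s s3 us).
    apply: (sub_in_cycle (P := mem s)) cs; last by apply/allP.
    move=> u v us' vs'; rewrite /tadj in_setU1 => /orP[/eqP E|//].
    have : b \in [set u; v] by rewrite E !inE eqxx orbT.
    by case/set2P=> E'; move: bs; rewrite E' ?us' ?vs'.
  case: (rot_to bs) => i t Et.
  have : cycle (tadj ([set a; b] |: F)) (b :: t) by rewrite -Et rot_cycle.
  have : uniq (b :: t) by rewrite -Et rot_uniq.
  have : 3 <= size (b :: t) by rewrite -Et size_rot.
  case: t {Et} => [|w1 [|z t]] //= _.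
  case/andP=> bnot /andP[w1n ut].
  move=> /andP[bw1 /andP[_ H]]; move: H; rewrite rcons_path => /andP[_ lb].
  have w1b : w1 != b by apply: contraNneq bnot => ->; rewrite inE eqxx.
  have w1a := key _ w1b bw1.
  set l := last z t in lb.
  have lin : l \in z :: t by exact: mem_last.
  have lb' : l != b by apply: contraNneq bnot => <-; rewrite in_cons lin orbT.
  have lb2 : tadj ([set a; b] |: F) b l by rewrite /tadj setUC.
  have la := key _ lb' lb2.
  by move: w1n; rewrite w1a -la lin.
Qed.

Lemma grow_card N F a b :
  is_tree adj N F -> a \in N -> b \notin N ->
  #|[set a; b] |: F| = #|F|.+1 /\ #|b |: N| = #|N|.+1.
Proof.
case=> _ HF _ _ aN bN; rewrite !cardsU1 bN; split=> //.
case: (boolP ([set a; b] \in F)) => // abF.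
by case: (edge_notin HF bN (_ : [set b; a] \in F)); rewrite setUC.
Qed.

Lemma span (W : {set T}) r : r \in W ->
  (forall y, y \in W -> connect (rW W) r y) ->
  exists F, is_tree adj W F /\ #|F| + 1 = #|W|.
Proof.
move=> rW0 HW.
suff: forall n (N : {set T}), N \subset W -> r \in N -> #|W :\: N| = n ->
   (exists F, is_tree adj N F /\ #|F| + 1 = #|N|) ->
   exists F, is_tree adj W F /\ #|F| + 1 = #|W|.
  move=> H; apply: (H _ [set r]) => //.
  - by rewrite sub1set.
  - by rewrite inE.
  - by exists set0; split; [exact: tree1 | rewrite cards0 cards1].
elim=> [|n IH] N sNW rN cn [F [tF cF]].
  have : W :\: N == set0 by rewrite -cards_eq0 cn.
  rewrite setD_eq0 => sWN.
  have E : W = N by apply/eqP; rewrite eqEsubset sWN sNW.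
  by rewrite E; exists F.
have : W :\: N != set0 by rewrite -cards_eq0 cn.
case/set0Pn=> y; rewrite inE => /andP[yN yW].
case/connectP: (HW y yW) => p pp ly.
have lN : last r p \notin N by rewrite -ly.
have [a [b [aN bN]]] := cross rN lN pp.
case/and3P=> aW bW ab.
apply: (IH (b |: N)).
- by rewrite subUset sub1set bW sNW.
- by rewrite inE rN orbT.
- move: cn; rewrite !cardsD.
  have -> : W :&: (b |: N) = b |: (W :&: N).
    by apply/setP=> z; rewrite !inE; case: eqP => // ->; rewrite bW.
  rewrite cardsU1 inE (negbTE bN) andbF /=.
  have : #|W :&: N| < #|W|.
    apply: proper_card; apply/properP; split; first exact: subsetIl.
    by exists y; rewrite // inE (negbTE yN) andbF.
  move=> lt; rewrite add1n subnS => ->.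
  by [].
- exists ([set a; b] |: F); split; first exact: grow.
  by have [-> ->] := grow_card tF aN bN; rewrite addSn cF.
Qed.
End Gen.
Lemma rW_mono (T : finType) (adj : rel T) (W W' : {set T}) a b :
  W \subset W' -> connect (rW adj W) a b -> connect (rW adj W') a b.
Proof.
move=> /subsetP sW; apply: connect_sub => u v /and3P[uW vW uv].
by apply: connect1; rewrite /rW /= !sW.
Qed.

Lemma rW_step (T : finType) (adj : rel T) (W : {set T}) a b :
  a \in W -> b \in W -> (a = b \/ adj a b) -> connect (rW adj W) a b.
Proof.
move=> aW bW [->|ab]; first exact: connect0.
by apply: connect1; rewrite /rW /= aW bW.
Qed.

Lemma tree_conn (T : finType) (adj : rel T) N F (W : {set T}) x y :
  symmetric adj -> is_tree adj N F -> N \subset W -> x \in N -> y \in N ->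
  connect (rW adj W) x y.
Proof.
move=> asym [_ HF HC _] /subsetP sNW xN yN.
apply: (connect_sub _ (HC x y xN yN)) => a b ab.
have [x0 [y0 [xy E xN0 yN0 axy]]] := HF _ ab.
have aI : a \in [set x0; y0] by rewrite -E !inE eqxx.
have bI : b \in [set x0; y0] by rewrite -E !inE eqxx orbT.
apply: connect1; rewrite /rW /=.
have aN : a \in N by case/set2P: aI => ->.
have bN : b \in N by case/set2P: bI => ->.
rewrite !sNW //=.
case/set2P: aI => Ea; case/set2P: bI => Eb.
- have : y0 \in [set a; b] by rewrite E !inE eqxx orbT.
  by rewrite Ea Eb !inE orbb eq_sym (negbTE xy).
- by rewrite Ea Eb.
- by rewrite Ea Eb asym.
- have : x0 \in [set a; b] by rewrite E !inE eqxx.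
  by rewrite Ea Eb !inE orbb (negbTE xy).
Qed.

Section G.
Variables (V : finType) (K : nat) (e : rel V) (Gamma : V -> {set 'I_K}).
Hypothesis e_sym : symmetric e.
Hypothesis Gamma_ne : forall u, Gamma u != set0.

Lemma xedge_sym : symmetric (xedge e Gamma).
Proof.
case=> [u|[a i]] [v|[b j]] //=.
rewrite /sat_sat /= (e_sym b a) (eq_sym b a) (eq_sym j i).
case: (a == b); case: (i != j); case: (e a b); case: (sat_exists _ _ _); case: (sat_exists _ _ _);
  case: (i \in _); case: (j \in _) => //.
Qed.

Lemma near m (c : xvert V K) : is_sat e Gamma c -> xedge e Gamma (inl m) c ->
  exists k, sat_exists e Gamma (m, k) /\ (c = inr (m, k) \/ xedge e Gamma c (inr (m, k))).
Proof.
case: c => [//|[a i]] /= sat.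
rewrite /nuc_sat /= => /orP[/andP[/eqP E _]|/andP[ema iG]].
  by subst a; exists i; split; [|left].
have [k kG] := set0Pn _ (Gamma_ne a).
exists k; split.
  by apply/existsP; exists a; rewrite /= ema.
by right; rewrite /= /sat_sat /= e_sym ema iG kG !orbT.
Qed.

Lemma mid m k k' : sat_exists e Gamma (m, k) -> sat_exists e Gamma (m, k') ->
  (inr (m, k) : xvert V K) = inr (m, k') \/ xedge e Gamma (inr (m, k)) (inr (m, k')).
Proof.
move=> s1 s2; case: (eqVneq k k') => [->|kk]; first by left.
by right; rewrite /= /sat_sat /= eqxx kk s1 s2.
Qed.
End G.

Theorem mainTheorem6 (V : finType) (e : rel V) (K : nat) (Gamma : V -> {set 'I_K})
  (e_sym : symmetric e) (e_irr : irreflexive e)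
  (e_conn : forall x y : V, connect e x y) (V_ge2 : 2 <= #|V|)
  (K_pos : 0 < K) (Gamma_ne : forall u, Gamma u != set0)
  (M : {set V}) (NSB : {set xvert V K}) (ESB : {set {set xvert V K}})
  (hSB : min_sat_bridge e Gamma M NSB ESB)
  (C : {set xvert V K})
  (hCsat : {subset C <= is_sat e Gamma})
  (hCadj : forall c, c \in C -> exists2 m, m \in M & xedge e Gamma (inl m) c) :
  (exists (N : {set xvert V K}) (F : {set {set xvert V K}}),
      [/\ sat_tree e Gamma N F, NSB :|: C \subset N &
          #|F| <= #|NSB| + 3 * #|C| - 1])
  /\ (forall (N : {set xvert V K}) (F : {set {set xvert V K}}),
        min_steiner_tree e Gamma C N F -> #|F| <= #|NSB| + 3 * #|C| - 1).
Proof.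
case: hSB => [[[tSB satSB] domSB] _].
have asym : symmetric (xedge e Gamma) := xedge_sym Gamma e_sym.
have [r rN] : exists r, r \in NSB by case: tSB => /set0Pn.
have flip : forall a b, a = b \/ xedge e Gamma a b -> b = a \/ xedge e Gamma b a.
  by move=> a b [->|ab]; [left | right; rewrite asym].
have build : forall s : seq (xvert V K), {subset s <= C} ->
  exists W : {set xvert V K}, [/\ NSB \subset W, {subset s <= W},
     #|W| <= #|NSB| + 3 * size s, {subset W <= is_sat e Gamma} &
     forall y, y \in W -> connect (rW (xedge e Gamma) W) r y].
  elim=> [|c s IH] sC.
    exists NSB; split => //; first by rewrite muln0 addn0.
    by move=> y yN; exact: tree_conn asym tSB (subxx _) rN yN.
  have [W [sNW sW cW satW conW]] := IH (fun x xs => sC x (mem_behead (s := c :: s) xs)).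
  have cC : c \in C := sC c (mem_head _ _).
  have [m mM cm] := hCadj c cC.
  have [x xN mx] := domSB m mM.
  have [k [sk ck]] := near e_sym Gamma_ne (hCsat c cC) cm.
  have [k' [sk' xk']] := near e_sym Gamma_ne (satSB x xN) mx.
  have w12 := mid sk sk'.
  set w1 : xvert V K := inr (m, k).
  set w2 : xvert V K := inr (m, k').
  set P : {set xvert V K} := [set z in [:: c; w1; w2]].
  have PW : forall z, z \in P -> z \in W :|: P by move=> z zP; rewrite in_setU zP orbT.
  have cP : c \in P by rewrite inE /= in_cons eqxx.
  have w1P : w1 \in P by rewrite inE /= !in_cons eqxx orbT.
  have w2P : w2 \in P by rewrite inE /= !in_cons eqxx !orbT.
  have xW : x \in W :|: P by rewrite in_setU (subsetP sNW x xN).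
  exists (W :|: P); split.
  - by rewrite subsetU ?sNW.
  - move=> z; rewrite in_cons => /orP[/eqP->|zs]; first exact: PW.
    by rewrite in_setU sW.
  - rewrite cardsU; apply: leq_trans (leq_subr _ _) _.
    have cP3 : #|P| <= 3 by rewrite cardsE; exact: card_size.
    by rewrite /= mulnS addnCA addnC; exact: leq_add.
  - move=> z; rewrite in_setU => /orP[/satW //|].
    rewrite inE /= !in_cons in_nil orbF => /or3P[/eqP->|/eqP->|/eqP->] //.
    exact: hCsat.
  - have rx : connect (rW (xedge e Gamma) (W :|: P)) r x.
      exact: rW_mono (subsetUl _ _) (conW x (subsetP sNW x xN)).
    have xw2 : connect (rW (xedge e Gamma) (W :|: P)) x w2 by exact: rW_step xW (PW _ w2P) xk'.
    have w21 : connect (rW (xedge e Gamma) (W :|: P)) w2 w1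
      by exact: rW_step (PW _ w2P) (PW _ w1P) (flip _ _ w12).
    have w1c : connect (rW (xedge e Gamma) (W :|: P)) w1 c
      by exact: rW_step (PW _ w1P) (PW _ cP) (flip _ _ ck).
    move=> z; rewrite in_setU => /orP[zW|].
      exact: rW_mono (subsetUl _ _) (conW z zW).
    rewrite inE /= !in_cons in_nil orbF => /or3P[/eqP->|/eqP->|/eqP->].
    + exact: connect_trans (connect_trans (connect_trans rx xw2) w21) w1c.
    + exact: connect_trans (connect_trans rx xw2) w21.
    + exact: connect_trans rx xw2.
have subE : {subset enum C <= C} by move=> z; rewrite mem_enum.
have [W [sNW sCW cW satW conW]] := build (enum C) subE.
rewrite -cardE in cW.
have [F [tF cF]] := span (subsetP sNW r rN) conW.
have sCW' : C \subset W by apply/subsetP => z zC; apply: sCW; rewrite mem_enum.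
have bnd : #|F| <= #|NSB| + 3 * #|C| - 1.
  apply: (@leq_trans (#|W| - 1)); first by rewrite -cF addnK.
  exact: leq_sub2r.
split.
  exists W, F; split; [by split | | exact: bnd].
  by rewrite subUset; apply/andP; split.
move=> N F' [_ minF].
apply: leq_trans bnd.
exact: minF W F (conj (conj tF satW) sCW').
Qed.
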